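(* For distinct $i,j\in\{1,2,3\}$, the element $y_i+y_j$ is perfect in $D^{2,2,2}$.
   Context: $D^{2,2,2}$ is the modular lattice generated by $x_1,y_1,x_2,y_2,x_3,y_3$ subject only to $x_i\subseteq y_i$ ($i=1,2,3$), with a greatest element $I$ adjoined. Join is written $a+b$. A representation $\rho$ of $D^{2,2,2}$ in a finite-dimensional vector space $X$ (over a field) is a lattice morphism from $D^{2,2,2}$ to the subspace lattice of $X$, with $\rho(I)=X$; it is determined by subspaces $X_i=\rho(x_i)\subseteq Y_i=\rho(y_i)\subseteq X$. $\rho$ is decomposable if $X=X'\oplus X''$ with $X',X''\neq0$ and $\rho(a)=(\rho(a)\cap X')+(\rho(a)\cap X'')$ for all $a$. It is indecomposable if $X\ne0$ and it is not decomposable. An element $a\in D^{2,2,2}$ is perfect if $\rho(a)\in\{0,X\}$ for every indecomposable representation $\rho$ in a space $X$. *)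

(* Defs.v *)
From HB Require Import structures.
From mathcomp Require Import all_boot all_order all_algebra.
Set Implicit Arguments. Unset Strict Implicit. Unset Printing Implicit Defensive.
Import GRing.Theory.
Local Open Scope ring_scope.

(* Lattice terms over the generators x_1,y_1,x_2,y_2,x_3,y_3 (indexed by 'I_3)
   and the adjoined top element I.  Every element of D^{2,2,2} is the value of
   such a term, and a representation (lattice morphism) sends a term to the
   corresponding lattice polynomial in the subspaces. *)
Inductive d222_term : Type :=
  | GX of 'I_3
  | GY of 'I_3
  | GI
  | TJoin of d222_term & d222_term
  | TMeet of d222_term & d222_term.

Fixpoint rep_eval (K : fieldType) (vT : vectType K)
    (X Y : 'I_3 -> {vspace vT}) (t : d222_term) : {vspace vT} :=
  match t with
  | GX i => X i
  | GY i => Y i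
  | GI => fullv
  | TJoin a b => (rep_eval X Y a + rep_eval X Y b)%VS
  | TMeet a b => (rep_eval X Y a :&: rep_eval X Y b)%VS
  end.

Definition is_rep (K : fieldType) (vT : vectType K) (X Y : 'I_3 -> {vspace vT}) :=
  forall i, (X i <= Y i)%VS.

Definition rep_decomposable (K : fieldType) (vT : vectType K)
    (X Y : 'I_3 -> {vspace vT}) : Prop :=
  exists (X1 X2 : {vspace vT}),
    [/\ X1 != 0%VS, X2 != 0%VS, directv (X1 + X2), (X1 + X2)%VS = fullv
      & forall t : d222_term,
          rep_eval X Y t = ((rep_eval X Y t :&: X1) + (rep_eval X Y t :&: X2))%VS].

Definition rep_indecomposable (K : fieldType) (vT : vectType K)
    (X Y : 'I_3 -> {vspace vT}) : Prop :=
  (fullv : {vspace vT}) != 0%VS /\ ~ rep_decomposable X Y.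

Definition perfect (a : d222_term) : Prop :=
  forall (K : fieldType) (vT : vectType K) (X Y : 'I_3 -> {vspace vT}),
    is_rep X Y -> rep_indecomposable X Y ->
    rep_eval X Y a = 0%VS \/ rep_eval X Y a = fullv.

(* Main.v *)
Require Import Defs.
From HB Require Import structures.
From mathcomp Require Import all_boot all_order all_algebra.
From mathcomp Require Import zify.
From HB Require Import structures.
From mathcomp Require Import all_boot all_order all_algebra.
Set Implicit Arguments. Unset Strict Implicit. Unset Printing Implicit Defensive.
Import GRing.Theory.
Local Open Scope ring_scope.

Section Aux.
Variables (K : fieldType) (vT : vectType K).
Implicit Types A B W U S T : {vspace vT}.

Definition compat (X1 X2 A : {vspace vT}) := A = (A :&: X1 + A :&: X2)%VS.

Lemma compat_le X1 X2 A : (A :&: X1 + A :&: X2 <= A)%VS.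
Proof. by rewrite subv_add !capvSl. Qed.

Lemma compat_join X1 X2 A B : compat X1 X2 A -> compat X1 X2 B ->
  compat X1 X2 (A + B).
Proof.
move=> hA hB; apply/subv_anti; rewrite compat_le andbT.
rewrite {1}hA {1}hB !subv_add.
rewrite (subv_trans (capvS (addvSl A B) (subvv X1)) (addvSl _ _)).
rewrite (subv_trans (capvS (addvSl A B) (subvv X2)) (addvSr _ _)).
rewrite (subv_trans (capvS (addvSr A B) (subvv X1)) (addvSl _ _)).
by rewrite (subv_trans (capvS (addvSr A B) (subvv X2)) (addvSr _ _)).
Qed.

Lemma compat_meet X1 X2 A B : directv (X1 + X2) -> compat X1 X2 A -> compat X1 X2 B ->
  compat X1 X2 (A :&: B).
Proof.
move=> dx hA hB; apply/subv_anti; rewrite compat_le andbT.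
apply/subvP => v /memv_capP[vA vB].
have /memv_addP : v \in (A :&: X1 + A :&: X2)%VS by rewrite -hA.
move=> [a1 /memv_capP[a1A a1X] [a2 /memv_capP[a2A a2X] ea]].
have /memv_addP : v \in (B :&: X1 + B :&: X2)%VS by rewrite -hB.
move=> [b1 /memv_capP[b1B b1X] [b2 /memv_capP[b2B b2X] eb]].
have := (directv_add_unique dx) a1 b1 a2 b2 a1X b1X a2X b2X.
rewrite -ea -eb eqxx => /esym/eqP[e1 e2].
apply/memv_addP; exists a1; first by rewrite !memv_cap a1A a1X e1 b1B.
by exists a2 => //; rewrite !memv_cap a2A a2X e2 b2B.
Qed.

Lemma compat_sub X1 X2 A : (A <= X1)%VS -> compat X1 X2 A.
Proof.
move=> h; apply/subv_anti; rewrite compat_le andbT.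
by rewrite (capv_idPl h) addvSl.
Qed.

Lemma split_chain W S T : (S <= T)%VS ->
  exists U, [/\ (W :&: U = 0)%VS, (W + U = fullv)%VS, compat W U S & compat W U T].
Proof.
move=> ST.
set A := (S :\: W)%VS.
set B := (T :\: (T :&: W + S))%VS.
set C := (fullv :\: (W + T))%VS.
have AS : (A <= S)%VS by apply: diffvSl.
have BT : (B <= T)%VS by apply: diffvSl.
have eS : (A + S :&: W = S)%VS by apply: addv_diff_cap.
have hTS : (T :&: (T :&: W + S) = T :&: W + S)%VS.
  by apply/capv_idPr; rewrite subv_add capvSl ST.
have eT : (B + (T :&: W + S) = T)%VS by have := addv_diff_cap T (T :&: W + S); rewrite hTS.
have eF : (C + (W + T) = fullv)%VS by have := addv_diff_cap fullv (W + T); rewrite capfv.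
exists (A + B + C)%VS.
have sum : (W + (A + B + C) = fullv)%VS.
  apply/subv_anti; rewrite subvf /=; rewrite -eF subv_add; apply/andP; split.
    by rewrite (subv_trans _ (addvSr _ _)) // addvSr.
  rewrite subv_add addvSl /= -eT subv_add; apply/andP; split.
    by rewrite (subv_trans _ (addvSr _ _)) // (subv_trans _ (addvSl _ _)) // addvSr.
  rewrite subv_add (subv_trans (capvSr _ _) (addvSl _ _)) /= -eS subv_add.
  rewrite (subv_trans (capvSr _ _) (addvSl _ _)) andbT.
  by rewrite (subv_trans _ (addvSr _ _)) // (subv_trans _ (addvSl _ _)) // addvSl.
have dA := dimv_cap_compl S W.
have dB := dimv_cap_compl T (T :&: W + S).
have dC := dimv_cap_compl fullv (W + T).
have d1 := dimv_sum_cap W T.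
have d2 := dimv_sum_cap (T :&: W) S.
have e3 : (T :&: W :&: S = S :&: W)%VS.
  by rewrite capvC capvA (capv_idPl ST).
have d3 := dimv_leq_sum [:: A; B; C] predT id.
rewrite !big_cons !big_nil /= addv0 addn0 !addvA in d3.
have d4 := dimv_sum_cap W (A + B + C).
rewrite sum capfv hTS e3 in dA dB dC d2 *.
split => //.
- apply/eqP; rewrite -dimv_eq0; apply/eqP.
  rewrite capvC in d1; rewrite sum in d4.
  rewrite /A /B /C in d3 d4 *.
  lia.
- have AU : (A <= A + B + C)%VS by rewrite -addvA addvSl.
  have BU : (B <= A + B + C)%VS by rewrite (subv_trans (addvSr A B)) // addvSl.
  apply/subv_anti; rewrite compat_le andbT.
  apply: (subv_trans (_ : S <= A + S :&: W)%VS); first by rewrite eS.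
  rewrite subv_add addvSl andbT.
  by rewrite (subv_trans _ (addvSr _ _)) // subv_cap AS AU.
- have AU : (A <= A + B + C)%VS by rewrite -addvA addvSl.
  have BU : (B <= A + B + C)%VS by rewrite (subv_trans (addvSr A B)) // addvSl.
  apply/subv_anti; rewrite compat_le andbT.
  apply: (subv_trans (_ : T <= B + (T :&: W + (A + S :&: W)))%VS); first by rewrite eS eT.
  rewrite !subv_add addvSl /=.
  rewrite (subv_trans _ (addvSr _ _)) ?subv_cap ?BT ?BU //=.
  rewrite (subv_trans _ (addvSr _ _)) ?subv_cap ?(subv_trans AS ST) ?AU //=.
  by rewrite (subv_trans _ (addvSl _ _)) // capvS.
Qed.
End Aux.
Lemma third' (i j : 'I_3) : i != j -> exists k : 'I_3, forall m : 'I_3, [|| m == i, m == j | m == k].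
Proof.
move=> ij; exists (inord (3 - i - j)) => m.
have hi := ltn_ord i; have hj := ltn_ord j; have hm := ltn_ord m.
move: ij; rewrite -!val_eqE /= => ij.
rewrite inordK; last by move: ij hi hj; case: (val i) => [|[|[|a]]] //; case: (val j) => [|[|[|b]]].
move: (val i) (val j) (val m) hi hj hm ij => a b c.
by case: a => [|[|[|a]]] //; case: b => [|[|[|b]]] //; case: c => [|[|[|c]]].
Qed.

Lemma compat_all (K : fieldType) (vT : vectType K) (X Y : 'I_3 -> {vspace vT})
  (W U : {vspace vT}) : directv (W + U) -> (W + U = fullv)%VS ->
  (forall m, compat W U (X m)) -> (forall m, compat W U (Y m)) ->
  forall t, compat W U (rep_eval X Y t).
Proof.
move=> dx sum hX hY; elim=> [m|m||a ha b hb|a ha b hb] /=.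
- exact: hX.
- exact: hY.
- by rewrite /compat capfv capfv sum.
- exact: compat_join.
- exact: compat_meet.
Qed.

Theorem mainTheorem12 (i j : 'I_3) : i != j -> perfect (TJoin (GY i) (GY j)).
Proof.
move=> ij K vT X Y hrep [hfull hnd] /=.
set W := (Y i + Y j)%VS.
have [W0|Wn0] := eqVneq W 0%VS; first by left.
have [Wf|Wnf] := eqVneq W fullv; first by right.
exfalso; apply: hnd.
have [k hk] := third' ij.
have [U [cap sum cX cY]] := split_chain W (hrep k).
exists W, U; split => //.
- apply: contra Wnf => /eqP U0; apply/eqP; by rewrite -sum U0 addv0.
- exact/directv_addP.
- move=> t; apply: compat_all => //; first exact/directv_addP.
  + move=> m; have /or3P[/eqP->|/eqP->|/eqP->] := hk m => //;
    apply: compat_sub; apply: subv_trans (hrep _) _; by rewrite ?addvSl ?addvSr.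
  + move=> m; have /or3P[/eqP->|/eqP->|/eqP->] := hk m => //;
    apply: compat_sub; by rewrite ?addvSl ?addvSr.
Qed.
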